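(* Let $C\in\mathbb R^3$ be a unit vector. The set $\Delta=\{(x\cdot y,\ x\cdot C,\ y\cdot C): x,y\in\mathbb S^2\}\subset\mathbb R^3$ is convex.
   Context: $\mathbb S^2$ is the unit sphere in $\mathbb R^3$ and $\cdot$ is the Euclidean inner product. *)

(* Defs.v *)
From Stdlib Require Import Reals.
Open Scope R_scope.

Definition R3 : Type := (R * R * R)%type.

Definition dot (u v : R3) : R :=
  let '(u1, u2, u3) := u in let '(v1, v2, v3) := v in
  u1 * v1 + u2 * v2 + u3 * v3.

Definition in_S2 (x : R3) : Prop := dot x x = 1.

Definition DeltaSet (C : R3) (p : R3) : Prop :=
  exists x y : R3, in_S2 x /\ in_S2 y /\ p = (dot x y, dot x C, dot y C).

Definition add3 (u v : R3) : R3 :=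
  let '(u1, u2, u3) := u in let '(v1, v2, v3) := v in (u1 + v1, u2 + v2, u3 + v3).

Definition scal3 (t : R) (u : R3) : R3 :=
  let '(u1, u2, u3) := u in (t * u1, t * u2, t * u3).

Definition convex (S : R3 -> Prop) : Prop :=
  forall p q : R3, S p -> S q -> forall t : R, 0 <= t <= 1 ->
    S (add3 (scal3 t p) (scal3 (1 - t) q)).

(* Main.v *)
Require Import Defs.
From Stdlib Require Import Reals Lra Psatz.
Open Scope R_scope.

Definition Qr (c a b z1 z2 z3 : R) : R :=
  z1*z1+z2*z2+z3*z3+2*c*z1*z2+2*a*z1*z3+2*b*z2*z3.

Lemma real_part (c a b : R) :
  (forall z1 z2 z3, 0 <= Qr c a b z1 z2 z3) ->
  exists be be' ga', a*a+be*be = 1 /\ b*b+be'*be'+ga'*ga' = 1 /\ a*b+be*be' = c.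
Proof.
  intros H; unfold Qr in H.
  assert (HA : 0 <= 1 - a*a) by (specialize (H 1 0 (-a)); nra).
  assert (HB : 0 <= 1 - b*b) by (specialize (H 0 1 (-b)); nra).
  assert (HK : forall z1 z2, 0 <= (1-a*a)*z1*z1 + (1-b*b)*z2*z2 + 2*(c-a*b)*z1*z2).
  { intros z1 z2; specialize (H z1 z2 (-(a*z1+b*z2))); nra. }
  set (A := 1 - a*a) in *. set (B := 1 - b*b) in *. set (D := c - a*b) in *.
  destruct (Rle_lt_or_eq_dec 0 A HA) as [HA'|HA'].
  - assert (HD : D*D <= A*B).
    { specialize (HK D (-A)).
      assert (0 <= A*(A*B - D*D)) by nra. nra. }
    set (s := sqrt A).
    assert (Hs : s*s = A) by (apply sqrt_sqrt; lra).
    assert (Hs0 : 0 < s) by (apply sqrt_lt_R0; lra).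
    assert (E : B - D*D/A = (A*B-D*D)*/A) by (field; lra).
    assert (HE : 0 <= B - D*D/A).
    { rewrite E. apply Rmult_le_pos; [lra|]. apply Rlt_le, Rinv_0_lt_compat; lra. }
    exists s, (D/s), (sqrt (B - D*D/A)).
    split; [|split].
    + rewrite Hs; unfold A; ring.
    + rewrite sqrt_sqrt by exact HE. rewrite <- Hs. unfold B. field. lra.
    + replace (s*(D/s)) with D by (field; lra). unfold D; ring.
  - assert (HD0 : D = 0).
    { destruct (Req_dec D 0) as [h|h]; [exact h|].
      specialize (HK (-(B+1)/(2*D)) 1). rewrite <- HA' in HK.
      replace (2*D*(-(B+1)/(2*D))*1) with (-(B+1)) in HK by (field; auto).
      lra. }
    exists 0, (sqrt B), 0.
    split; [|split].
    + unfold A in HA'; lra.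
    + rewrite sqrt_sqrt by exact HB. unfold B; ring.
    + unfold D in HD0; lra.
Qed.

Lemma basis (C : R3) : dot C C = 1 -> exists e1 e2 : R3,
  dot e1 e1 = 1 /\ dot e2 e2 = 1 /\ dot C e1 = 0 /\ dot C e2 = 0 /\ dot e1 e2 = 0.
Proof.
  destruct C as [[c1 c2] c3]; unfold dot; intro H.
  destruct (Req_dec (c1*c1+c2*c2) 0) as [h|h].
  - exists (1,0,0), (0,1,0); simpl.
    assert (c1 = 0) by nra. assert (c2 = 0) by nra. subst. repeat split; ring.
  - assert (Hp : 0 < c1*c1+c2*c2) by (destruct (Rle_lt_or_eq_dec 0 (c1*c1+c2*c2)); nra).
    set (r := sqrt (c1*c1+c2*c2)).
    assert (Hr : r*r = c1*c1+c2*c2) by (apply sqrt_sqrt; lra).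
    assert (Hr0 : 0 < r) by (apply sqrt_lt_R0; lra).
    exists (-c2/r, c1/r, 0), (-c3*c1/r, -c3*c2/r, r).
    repeat split; field_simplify; try lra.
    all: assert (Hr2 : r^2 = c1*c1+c2*c2) by (rewrite <- Hr; ring).
    all: try replace (r^4) with ((r^2)^2) by ring.
    all: rewrite ?Hr2.
    1: field; lra.
    1: apply Rmult_eq_reg_r with (c1*c1+c2*c2); [|lra]; unfold Rdiv; rewrite Rmult_assoc, Rinv_l by lra; nra.
    unfold Rdiv; replace (- c1 ^ 2 * c3 + c3 * (c1 * c1 + c2 * c2) - c3 * c2 ^ 2) with 0 by ring; ring.
Qed.

Definition lc (al be ga : R) (u v w : R3) : R3 :=
  add3 (scal3 al u) (add3 (scal3 be v) (scal3 ga w)).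

Lemma dot_lc al be ga al' be' ga' u v w :
  dot (lc al be ga u v w) (lc al' be' ga' u v w) =
  al*al'*dot u u + be*be'*dot v v + ga*ga'*dot w w
  + (al*be'+be*al')*dot u v + (al*ga'+ga*al')*dot u w + (be*ga'+ga*be')*dot v w.
Proof.
  destruct u as [[u1 u2] u3]; destruct v as [[v1 v2] v3]; destruct w as [[w1 w2] w3].
  unfold lc, dot, add3, scal3; ring.
Qed.

Lemma dot_lcC al be ga u v w :
  dot (lc al be ga u v w) u = al*dot u u + be*dot u v + ga*dot u w.
Proof.
  destruct u as [[u1 u2] u3]; destruct v as [[v1 v2] v3]; destruct w as [[w1 w2] w3].
  unfold lc, dot, add3, scal3; ring.
Qed.

Lemma delta_Q (C x y : R3) z1 z2 z3 : dot C C = 1 -> in_S2 x -> in_S2 y ->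
  0 <= Qr (dot x y) (dot x C) (dot y C) z1 z2 z3.
Proof.
  destruct C as [[c1 c2] c3]; destruct x as [[x1 x2] x3]; destruct y as [[y1 y2] y3].
  unfold in_S2, dot, Qr; intros H Hx Hy.
  assert (E : (z1*x1+z2*y1+z3*c1)^2 + (z1*x2+z2*y2+z3*c2)^2 + (z1*x3+z2*y3+z3*c3)^2
    = z1*z1*(x1*x1+x2*x2+x3*x3) + z2*z2*(y1*y1+y2*y2+y3*y3) + z3*z3*(c1*c1+c2*c2+c3*c3)
     + 2*(x1*y1+x2*y2+x3*y3)*z1*z2 + 2*(x1*c1+x2*c2+x3*c3)*z1*z3 + 2*(y1*c1+y2*c2+y3*c3)*z2*z3)
    by ring.
  rewrite H, Hx, Hy in E.
  assert (0 <= (z1*x1+z2*y1+z3*c1)^2 + (z1*x2+z2*y2+z3*c2)^2 + (z1*x3+z2*y3+z3*c3)^2) by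
    (repeat apply Rplus_le_le_0_compat; apply pow2_ge_0).
  lra.
Qed.

Theorem mainTheorem5 (C : R3) (hC : dot C C = 1) : convex (DeltaSet C).
Proof.
  assert (Hchar : forall c a b, (forall z1 z2 z3, 0 <= Qr c a b z1 z2 z3) -> DeltaSet C (c,a,b)).
  { intros c a b H. destruct (real_part c a b H) as [be [be' [ga' [H1 [H2 H3]]]]].
    destruct (basis C hC) as [e1 [e2 [He1 [He2 [HC1 [HC2 H12]]]]]].
    exists (lc a be 0 C e1 e2), (lc b be' ga' C e1 e2).
    unfold in_S2; rewrite !dot_lc, !dot_lcC, hC, He1, He2, HC1, HC2, H12.
    repeat split; try f_equal; try f_equal; nra. }
  intros p q [x [y [Hx [Hy ->]]]] [x' [y' [Hx' [Hy' ->]]]] t Ht.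
  simpl. apply Hchar. intros z1 z2 z3.
  pose proof (delta_Q C x y z1 z2 z3 hC Hx Hy).
  pose proof (delta_Q C x' y' z1 z2 z3 hC Hx' Hy').
  unfold Qr in *.
  set (P := z1 * z1 + z2 * z2 + z3 * z3 + 2 * dot x y * z1 * z2 + 2 * dot x C * z1 * z3 + 2 * dot y C * z2 * z3) in *.
  set (P' := z1 * z1 + z2 * z2 + z3 * z3 + 2 * dot x' y' * z1 * z2 + 2 * dot x' C * z1 * z3 + 2 * dot y' C * z2 * z3) in *.
  match goal with |- 0 <= ?G => replace G with (t*P + (1-t)*P') by (unfold P, P'; ring) end.
  nra.
Qed.
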